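(* For all integers $m\ge1$ and $j\ge0$, \[b_{\mathcal{G}}(m,m+j,2)=q^{m+\binom{m+1}{2}+\binom j2}{m-1\brack j-1}.\]
   Context: An overpartition is a partition in which the first occurrence of each part size may be overlined, with parts listed in non-increasing order with respect to $1<\bar1<2<\bar2<\cdots$. A part is of size $t$ if it is $t$ or $\bar t$, and $|\pi|$ is the sum of the sizes of the parts. For $m\ge1$, $\mathcal{G}(m)$ is the set of overpartitions $(\pi_1,\dots,\pi_m)$ such that for every $1\le i<m$, if $\pi_{i+1}$ has size $t$ then $\pi_i\in\{\overline{t+1},\,t+2\}$. $b_{\mathcal{G}}(m,j,2)$ is $\sum q^{|\pi|}$ over $\pi\in\mathcal{G}(m)$ whose largest part has size $j$ and whose smallest part is the non-overlined part $2$. The Gaussian binomial is ${M\brack N}=\frac{(q;q)_M}{(q;q)_N(q;q)_{M-N}}$ for $0\le N\le M$ and $0$ otherwise; in particular ${m-1\brack -1}=0$. *)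

(* Defs.v *)
From HB Require Import structures.
From mathcomp Require Import all_boot all_order all_algebra fraction.
Set Implicit Arguments. Unset Strict Implicit. Unset Printing Implicit Defensive.
Import GRing.Theory Num.Theory.
Local Open Scope ring_scope.

Notation "x %:F" := (@FracField.tofrac _ x).

(* A part of an overpartition: (size t, overlined?).  (t, true) is \bar t. *)
Definition part := (nat * bool)%type.

Definition part_le (x y : part) : bool :=
  (x.1 < y.1)%N || ((x.1 == y.1) && (x.2 ==> y.2)).

(* An overpartition: positive parts, listed in non-increasing order w.r.t.
   part_le, where only the first occurrence of a size may be overlined
   (equivalently, each overlined part occurs at most once). *)
Definition is_overpartition (s : seq part) : bool :=
  [&& all (fun p => 0 < p.1)%N s,
      sorted (fun x y => part_le y x) s &
      uniq [seq p <- s | p.2]].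

Definition opweight (s : seq part) : nat := sumn (map fst s).

Definition G_rel (x y : part) : bool :=
  (x == (y.1.+1, true)) || (x == (y.1.+2, false)).

Definition inG (m : nat) (s : seq part) : bool :=
  [&& is_overpartition s, size s == m & sorted G_rel s].

Definition largest_size (s : seq part) : nat := \max_(p <- s) p.1.

(* smallest part = last part (parts are listed in non-increasing order) *)
Definition smallest_part (s : seq part) : part := last (0%N, false) s.

Definition of_tuple_part (j : nat) (x : 'I_j.+1 * bool) : part := (val x.1, x.2).

(* b_G(m,j,2) as a polynomial in q = 'X.  Every pi in G(m) whose largest part
   has size j has all part sizes <= j, hence is the image of a unique
   m-tuple of ('I_j.+1 * bool). *)
Definition bG2 (m j : nat) : {poly int} :=
  \sum_(s : m.-tuple ('I_j.+1 * bool) |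
         let pi := map (@of_tuple_part j) s in
         [&& inG m pi, largest_size pi == j & smallest_part pi == (2%N, false)])
    'X^(opweight (map (@of_tuple_part j) s)).

Definition qpoch (M : nat) : {poly int} := \prod_(i < M) (1 - 'X^(i.+1)).

Definition gauss (M N : int) : {fraction {poly int}} :=
  if (0 <= N) && (N <= M) then
    (qpoch `|M|%N)%:F / ((qpoch `|N|%N)%:F * (qpoch `|M - N|%N)%:F)
  else 0.

(* Main.v *)
Require Import Defs.
From HB Require Import structures.
From mathcomp Require Import all_boot all_order all_algebra fraction.
From mathcomp Require Import ring zify.
Import GRing.Theory Num.Theory.
Local Open Scope ring_scope.

Fixpoint gb (n k : nat) : {poly int} :=
  match n, k with
  | _, 0%N => 1
  | 0%N, _.+1 => 0
  | n'.+1, k'.+1 => gb n' k' + 'X^(k'.+1) * gb n' k'.+1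
  end.

Lemma gb_gt n k : (n < k)%N -> gb n k = 0.
Proof.
elim: n k => [|n IH] [|k] //.
rewrite ltnS => H /=.
by rewrite (IH k H) (IH k.+1 (ltnW H)) mulr0 addr0.
Qed.

Lemma qpochS k : qpoch k.+1 = qpoch k * (1 - 'X^(k.+1)).
Proof. by rewrite /qpoch big_ord_recr. Qed.

Lemma qpoch0 : qpoch 0 = 1.
Proof. by rewrite /qpoch big_ord0. Qed.

Lemma gb_qpoch n k : (k <= n)%N -> gb n k * (qpoch k * qpoch (n - k)) = qpoch n.
Proof.
elim: n k => [|n IH] [|k] //= H.
- by rewrite qpoch0 !mulr1.
- by rewrite qpoch0 subn0 !mul1r.
- rewrite subSS qpochS.
  have {}H : (k <= n)%N by [].
  case: (ltngtP k n) => [kn|nk|->]; first last.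
    rewrite subnn (@gb_gt n n.+1 (ltnSn n)) mulr0 addr0 qpoch0 mulr1 qpochS.
    by rewrite -{2}(IH n (leqnn n)) subnn qpoch0 mulr1 mulrA.
  + by exfalso; lia.
  + have IH1 := IH k (ltnW kn).
    have IH2 := IH k.+1 kn.
    have e : (n - k = (n - k.+1).+1)%N by lia.
    rewrite e qpochS -e in IH1 *.
    rewrite (qpochS n).
    set u := 'X^(k.+1) : {poly int}; set v := 'X^(n - k) : {poly int}.
    have uv : 'X^(n.+1) = u * v :> {poly int}.
      by rewrite -exprD; congr ('X^_); lia.
    rewrite uv.
    have -> : qpoch n * (1 - u * v) =
      (gb n k * (qpoch k * (qpoch (n - k.+1) * (1 - v)))) * (1 - u) +
      u * ((gb n k.+1 * (qpoch k * (1 - u) * qpoch (n - k.+1)))) * (1 - v).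
      by rewrite IH1 -qpochS IH2; ring.
    ring.
Qed.

Lemma qpoch_neq0 k : qpoch k != 0.
Proof.
apply/negP => /eqP H.
have : (qpoch k).[0] = 1.
  rewrite /qpoch horner_prod; apply: big1 => i _.
  by rewrite hornerD hornerN hornerC hornerXn expr0n /= subr0.
by rewrite H horner0 => /eqP; rewrite eq_sym oner_eq0.
Qed.

Lemma gauss_gb n k : gauss n%:Z k%:Z = (gb n k)%:F.
Proof.
rewrite /gauss lez_nat /=.
case: (leqP k n) => kn /=.
- rewrite subzn // !absz_nat.
  rewrite -(@gb_qpoch n k kn).
  have -> : (qpoch k)%:F * (qpoch (n-k))%:F = (qpoch k * qpoch (n-k))%:F.
    by rewrite rmorphM.
  rewrite [X in X / _]rmorphM /= mulfK //.
  by rewrite tofrac_eq0 mulf_neq0 // qpoch_neq0.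
- by rewrite gb_gt // rmorph0.
Qed.

Definition top (ds : seq bool) : nat := (2 + size ds + count id ds)%N.

Fixpoint gen (ds : seq bool) : seq part :=
  match ds with
  | [::] => [:: (2%N, false)]
  | b :: ds' => (if b then ((top ds').+2, false) else ((top ds').+1, true)) :: gen ds'
  end.

Fixpoint steps (s : seq part) : seq bool :=
  match s with
  | x :: ((y :: _) as s') => (x.1 == y.1.+2) :: steps s'
  | _ => [::]
  end.


Lemma gen_nil ds : gen ds = (head (0%N,false) (gen ds)) :: behead (gen ds).
Proof. by case: ds. Qed.

Lemma head_gen ds : (head (0%N,false) (gen ds)).1 = top ds.
Proof.
case: ds => [|b ds] //=; rewrite /top /=; case: b => /=; lia.
Qed.

Lemma size_gen ds : size (gen ds) = (size ds).+1.
Proof. by elim: ds => //= b ds ->. Qed.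

Lemma last_gen ds x0 : last x0 (gen ds) = (2%N, false).
Proof. by elim: ds x0 => //= b ds IH x0; rewrite IH. Qed.

Lemma sorted_gen ds : sorted G_rel (gen ds).
Proof.
elim: ds => //= b ds IH.
rewrite gen_nil /= in IH *; rewrite IH andbT /G_rel -head_gen.
by case: b; rewrite eqxx ?orbT.
Qed.

Lemma G_rel_lt x y : G_rel x y -> (y.1 < x.1)%N.
Proof. by case/orP => /eqP ->. Qed.

Lemma sorted_gen_lt ds : sorted (fun x y : part => (y.1 < x.1)%N) (gen ds).
Proof. by apply: (sub_sorted _ (sorted_gen ds)) => x y; apply: G_rel_lt. Qed.

Lemma all_gen_le ds : all (fun p : part => (1 < p.1 <= top ds)%N) (gen ds).
Proof.
elim: ds => //= b ds IH; apply/andP; split.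
  rewrite /top /=; case: b => /=; lia.
apply: sub_all IH => p /andP[H1 H2]; rewrite H1 /=; rewrite /top /= in H2 *; lia.
Qed.

Lemma overp_gen ds : is_overpartition (gen ds).
Proof.
apply/and3P; split.
- by apply: sub_all (all_gen_le ds) => p /andP[H _]; apply: ltnW.
- by apply: sub_sorted (sorted_gen_lt ds) => x y H; rewrite /part_le H.
- apply: filter_uniq; apply: sorted_uniq (sorted_gen_lt ds).
  + by move=> x y z /= H1 H2; apply: ltn_trans H1.
  + by move=> x /=; rewrite ltnn.
Qed.

Lemma largest_gen ds : largest_size (gen ds) = top ds.
Proof.
rewrite /largest_size; elim: ds => [|b ds IH]; first by rewrite big_cons big_nil.
rewrite [gen _]/= big_cons IH; rewrite /top /=; case: b => /=; lia.
Qed.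

Lemma opweight_gen b ds :
  opweight (gen (b :: ds)) = ((top ds).+1 + b + opweight (gen ds))%N.
Proof. by rewrite /opweight /=; case: b => /=; lia. Qed.

Lemma size_steps s : size (steps s) = (size s).-1.
Proof. by elim: s => [|x [|y s] IH] //=; rewrite IH. Qed.

Lemma steps_gen ds : steps (gen ds) = ds.
Proof.
elim: ds => //= b ds IH.
rewrite gen_nil /= in IH *; rewrite IH head_gen.
case: b => /=; rewrite ?eqxx //; congr (_ :: _); apply/negbTE; lia.
Qed.

Lemma gen_steps s : s != [::] -> sorted G_rel s -> last (0%N, false) s = (2%N, false) ->
  gen (steps s) = s.
Proof.
elim: s => [|x [|y s] IH] //= _.
  by move=> _ ->.
case/andP=> Gxy Hs Hl.
have IH' := IH isT Hs Hl.
rewrite IH'.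
have -> : top (steps (y :: s)) = y.1 by rewrite -head_gen IH'.
case/orP: Gxy => /eqP ->/=.
  by rewrite eqSS; have -> : (y.1 == y.1.+1) = false by apply/negbTE; lia.
by rewrite eqxx.
Qed.

Definition enc (N : nat) (p : part) : 'I_N.+1 * bool := (inord p.1, p.2).

Lemma size_encgen N n (d : n.-tuple bool) : size (map (enc N) (gen d)) == n.+1.
Proof. by rewrite size_map size_gen size_tuple. Qed.

Definition hh N n (d : n.-tuple bool) : n.+1.-tuple ('I_N.+1 * bool) :=
  Tuple (@size_encgen N n d).

Lemma size_steps_t N n (s : n.+1.-tuple ('I_N.+1 * bool)) :
  size (steps (map (@of_tuple_part N) s)) == n.
Proof. by rewrite size_steps size_map size_tuple. Qed.

Definition hh' N n (s : n.+1.-tuple ('I_N.+1 * bool)) : n.-tuple bool :=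
  Tuple (@size_steps_t N n s).

Lemma enc_otp N x : enc N (@of_tuple_part N x) = x.
Proof. by case: x => i b; rewrite /enc /of_tuple_part /= inord_val. Qed.

Lemma otp_enc N (s : seq part) : all (fun p : part => p.1 <= N)%N s ->
  map (@of_tuple_part N) (map (enc N) s) = s.
Proof.
elim: s => //= [[a b] s IH] /andP[/= Ha Hs].
by rewrite IH // /of_tuple_part /enc /= inordK.
Qed.

Lemma reindex_main n j :
  bG2 n.+1 (n.+1 + j) =
  \sum_(d : n.-tuple bool | (count id d).+1 == j) 'X^(opweight (gen d)).
Proof.
set N := (n.+1 + j)%N.
rewrite /bG2 (reindex_onto (@hh N n) (@hh' N n)).
  have Hfw : forall d,
    [&& inG n.+1 (map (@of_tuple_part N) (@hh N n d)),
        largest_size (map (@of_tuple_part N) (@hh N n d)) == N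
      & smallest_part (map (@of_tuple_part N) (@hh N n d)) == (2%N, false)] &&
    (@hh' N n (@hh N n d) == d) ->
    map (@of_tuple_part N) (@hh N n d) = gen d /\ (count id d).+1 == j.
    move=> d.
    set pi := map _ (@hh N n d).
    move=> /andP[/and3P[/and3P[_ Hsz Hsort] /eqP Hl /eqP Hs] /eqP Hst].
    have Hpi : pi = gen d.
      have <- : steps pi = d by move/(congr1 val): Hst.
      rewrite gen_steps //.
      by apply/eqP => E; rewrite E in Hsz.
    split => //.
    rewrite Hpi largest_gen /top size_tuple in Hl.
    by apply/eqP; rewrite /N in Hl; lia.
  apply: eq_big => d.
    set pi := map _ (@hh N n d).
    apply/idP/idP.
    - by move/Hfw => [].
    - move=> /eqP Hc; have {}Hc : ((count id d).+1 = j)%N := Hc.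
      have Hpi : pi = gen d.
        rewrite /pi /= otp_enc //.
        apply: sub_all (all_gen_le d) => p /andP[_ H].
        by rewrite /top size_tuple /N in H *; lia.
      rewrite Hpi largest_gen /top size_tuple.
      apply/andP; split; [apply/and3P; split|].
      + by rewrite /inG overp_gen sorted_gen size_gen size_tuple eqxx.
      + by rewrite /N; apply/eqP; lia.
      + by rewrite /smallest_part last_gen.
      + by apply/eqP; apply: val_inj; rewrite /= -/pi Hpi steps_gen.
  by move/Hfw => [->].
move=> s /and3P[/and3P[_ Hsz Hsort] _ /eqP Hst].
apply: val_inj => /=.
rewrite gen_steps //.
- by rewrite -map_comp (eq_map (@enc_otp N)) map_id.
- by apply/eqP => E; rewrite E in Hsz.
Qed.

Lemma tuple_split n (P : pred (n.+1.-tuple bool)) (F : n.+1.-tuple bool -> {poly int}) :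
  \sum_(t | P t) F t =
  \sum_(b : bool) \sum_(t : n.-tuple bool | P (cons_tuple b t)) F (cons_tuple b t).
Proof.
rewrite pair_big_dep /=.
rewrite (reindex_onto (fun p : bool * n.-tuple bool => cons_tuple p.1 p.2)
                      (fun t => (thead t, behead_tuple t))) /=.
  apply: eq_bigl => -[b t] /=.
  have -> : (thead (cons_tuple b t), behead_tuple (cons_tuple b t)) == (b, t).
    by apply/eqP; congr (_, _); apply: val_inj.
  by rewrite andbT.
move=> t _; apply: val_inj => /=.
by case: t => -[|x s] //.
Qed.

Lemma binS2 n : ('C(n.+1, 2) = n + 'C(n, 2))%N.
Proof. by rewrite binS bin1 addnC. Qed.

Definition Tq n k : {poly int} :=
  \sum_(d : n.-tuple bool | count id d == k) 'X^(opweight (gen d)).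

Lemma Tq_closed n k :
  Tq n k = 'X^(n.+1 + 'C(n.+2, 2) + 'C(k.+1, 2)) * gb n k.
Proof.
elim: n k => [|n IH] k.
  rewrite /Tq; case: k => [|k].
    rewrite (big_pred1 [tuple]) /=; last by move=> t; rewrite tuple0 /=.
    by rewrite mulr1.
  rewrite big_pred0 /=; first by rewrite mulr0.
  by move=> t; rewrite tuple0.
rewrite /Tq tuple_split big_bool /=.
have E (b : bool) (k' : nat) : (b + k' = k)%N ->
  \sum_(t : n.-tuple bool | count id (cons_tuple b t) == k)
     'X^(opweight (gen (cons_tuple b t))) =
  'X^(n.+3 + k) * Tq n k'.
  move=> Hbk; rewrite /Tq mulr_sumr.
  apply: eq_big => t.
    by rewrite /= -Hbk eqn_add2l.
  move=> /eqP Hc; rewrite /= opweight_gen -exprD /top size_tuple.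
  have H2 : (b + count id t = k)%N := Hc.
  congr ('X^_); rewrite -H2; case: b {Hbk H2 Hc} => /=; lia.
case: k E => [|k] E.
  rewrite (E false 0%N) // big_pred0; last by move=> t.
  rewrite add0r IH mulrA -exprD /=.
  congr ('X^_ * _); last by case: (n) {IH E}.
  by rewrite !binS2; lia.
rewrite (E false k.+1) // (E true k) // IH IH /=.
rewrite -mulrDr mulrDr !mulrA -!exprD.
have -> : (n.+3 + k.+1 + (n.+1 + 'C(n.+2, 2) + 'C(k.+2, 2)))%N =
          (n.+2 + 'C(n.+3, 2) + 'C(k.+2, 2) + k.+1)%N.
  rewrite !binS2; lia.
have -> : (n.+3 + k.+1 + (n.+1 + 'C(n.+2, 2) + 'C(k.+1, 2)))%N =
          (n.+2 + 'C(n.+3, 2) + 'C(k.+2, 2))%N.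
  rewrite !binS2; lia.
by rewrite (exprD _ (n.+2 + 'C(n.+3, 2) + 'C(k.+2, 2))%N k.+1) mulrDr mulrA.
Qed.

Theorem mainTheorem18 (m j : nat) : (1 <= m)%N ->
  (bG2 m (m + j))%:F =
    ('X^(m + 'C(m.+1, 2) + 'C(j, 2)) : {poly int})%:F
      * gauss (m%:Z - 1) (j%:Z - 1).
Proof.
case: m => [//|n] _.
rewrite reindex_main.
have -> : (n.+1)%:Z - 1 = n%:Z by rewrite -addn1 PoszD addrK.
case: j => [|k].
  rewrite big_pred0 //.
  by rewrite /gauss /= rmorph0 mulr0.
have -> : (k.+1)%:Z - 1 = k%:Z by rewrite -addn1 PoszD addrK.
rewrite gauss_gb -rmorphM -Tq_closed.
by [].
Qed.
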